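(* Let $X$ be a locally finite poset, $R$ a commutative unital ring and $\alpha_1,\dots,\alpha_n$ pairwise commuting idempotents of $I(X,R)$. Then there exists an invertible $\beta\in I(X,R)$ such that $\alpha_i=\beta(\alpha_i)_D\beta^{-1}$ for all $1\le i\le n$.
   Context: $I(X,R)$ is the incidence algebra of the locally finite poset $X$ over $R$: functions $f:X\times X\to R$ with $f(x,y)=0$ unless $x\le y$, with product $(fg)(x,y)=\sum_{x\le z\le y}f(x,z)g(z,y)$. For $f\in I(X,R)$, its diagonal $f_D$ is defined by $f_D(x,x)=f(x,x)$ and $f_D(x,y)=0$ for $x\ne y$. *)

(* Defs.v *)
From HB Require Import structures.
From mathcomp Require Import all_boot all_order all_algebra.
Set Implicit Arguments. Unset Strict Implicit. Unset Printing Implicit Defensive.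
Import Order.TTheory GRing.Theory.
Local Open Scope ring_scope.
Local Open Scope order_scope.

(* Local finiteness is witnessed by an interval enumeration
   [itv x y], a duplicate-free list of exactly the z with x <= z <= y
   (see [is_interval_enum]).  Elements of I(X,R) are functions
   f : X -> X -> R with f x y = 0 unless x <= y. *)

Section Incidence.
Context {d : Order.disp_t} (X : porderType d) (R : comPzRingType).

Definition is_interval_enum (itv : X -> X -> seq X) : Prop :=
  forall x y, uniq (itv x y) /\ (forall z, (z \in itv x y) = (x <= z <= y)).

Definition in_incidence (f : X -> X -> R) : Prop :=
  forall x y, ~~ (x <= y) -> f x y = 0%R.

Definition imul (itv : X -> X -> seq X) (f g : X -> X -> R) : X -> X -> R :=
  fun x y => (\sum_(z <- itv x y) f x z * g z y)%R.

Definition ione : X -> X -> R := fun x y => ((x == y)%:R)%R.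

Definition idiag (f : X -> X -> R) : X -> X -> R :=
  fun x y => if x == y then f x x else 0%R.

End Incidence.

(* Main.v *)
Require Import Defs.
From HB Require Import structures.
From mathcomp Require Import all_boot all_order all_algebra.
From Stdlib Require Import FunctionalExtensionality.
Set Implicit Arguments. Unset Strict Implicit. Unset Printing Implicit Defensive.
Import Order.TTheory GRing.Theory.
Local Open Scope ring_scope.

Section Inc.
Variables (d : Order.disp_t) (X : porderType d) (R : comPzRingType).
Variables (itv : X -> X -> seq X) (Hitv : is_interval_enum itv).

Local Notation mul := (@imul _ X R itv).
Implicit Types f g h : X -> X -> R.
Local Notation one := (@ione _ X R).
Local Notation inc := (@in_incidence _ X R).
Definition iadd (f g : X -> X -> R) : X -> X -> R := fun x y => f x y + g x y.
Definition isub (f g : X -> X -> R) : X -> X -> R := fun x y => f x y - g x y.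
Definition izero : X -> X -> R := fun _ _ => 0.

Lemma uitv x y : uniq (itv x y). Proof. by case: (Hitv x y). Qed.
Lemma mitv x y z : (z \in itv x y) = (x <= z <= y)%O. Proof. by case: (Hitv x y). Qed.

Lemma sum_ext (s t : seq X) (F : X -> R) : uniq s -> uniq t -> {subset s <= t} ->
  (forall w, w \in t -> w \notin s -> F w = 0) ->
  \sum_(w <- s) F w = \sum_(w <- t) F w.
Proof.
move=> us ut sst H0.
rewrite [RHS](bigID (fun w => w \in s)) /= [X in _ + X]big1_seq ?addr0; last first.
  by move=> w /andP[ws wt]; rewrite H0.
rewrite -[RHS]big_filter /=; apply: perm_big; apply: uniq_perm => //.
  exact: filter_uniq.
by move=> w; rewrite mem_filter; case ws: (w \in s) => //=; rewrite sst.
Qed.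

Lemma itv_nil x y : ~~ (x <= y)%O -> itv x y = [::].
Proof.
move=> nxy; case E: (itv x y) => [|z s] //.
have : z \in itv x y by rewrite E mem_head.
rewrite mitv => /andP[h1 h2]; by rewrite (le_trans h1 h2) in nxy.
Qed.

Lemma mul_out f g x y : ~~ (x <= y)%O -> mul f g x y = 0.
Proof. by move=> h; rewrite /imul itv_nil // big_nil. Qed.

Lemma inc_mul f g : inc (mul f g). Proof. by move=> x y; apply: mul_out. Qed.
Lemma inc_add f g : inc f -> inc g -> inc (iadd f g).
Proof. by move=> hf hg x y h; rewrite /iadd hf ?hg ?addr0. Qed.
Lemma inc_sub f g : inc f -> inc g -> inc (isub f g).
Proof. by move=> hf hg x y h; rewrite /isub hf ?hg ?subrr. Qed.
Lemma inc_one : inc one.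
Proof. move=> x y h; rewrite /ione; case: eqP h => // ->; by rewrite lexx. Qed.
Lemma inc_zero : inc izero. Proof. by []. Qed.
Lemma inc_diag f : inc (idiag f).
Proof. move=> x y h; rewrite /idiag; case: eqP h => // ->; by rewrite lexx. Qed.

Lemma sum_diag x (F : X -> R) : \sum_(z <- itv x x) F z = F x.
Proof.
rewrite (bigD1_seq x) ?uitv //= ?mitv ?lexx // big1_seq ?addr0 //.
move=> z /andP[zx]; rewrite mitv => h; by rewrite (le_anti h) eqxx in zx.
Qed.

Lemma mul_diag f g x : mul f g x x = f x x * g x x.
Proof. by rewrite /imul sum_diag. Qed.

Lemma mul_extl f g x y z : inc g -> (x <= z)%O -> (z <= y)%O ->
  mul f g x z = \sum_(w <- itv x y) f x w * g w z.
Proof.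
move=> hg xz zy; apply: sum_ext; rewrite ?uitv //.
  by move=> w; rewrite !mitv => /andP[-> wz] /=; rewrite (le_trans wz zy).
move=> w; rewrite !mitv => /andP[-> _] /= nwz; rewrite hg ?mulr0 //.
Qed.

Lemma mul_extr f g x y w : inc f -> (x <= w)%O -> (w <= y)%O ->
  mul f g w y = \sum_(z <- itv x y) f w z * g z y.
Proof.
move=> hf xw wy; apply: sum_ext; rewrite ?uitv //.
  by move=> z; rewrite !mitv => /andP[wz ->]; rewrite (le_trans xw wz).
move=> z; rewrite !mitv => /andP[_ ->]; rewrite andbT => nwz; rewrite hf ?mul0r //.
Qed.

Lemma mulA f g h : inc g -> mul (mul f g) h = mul f (mul g h).
Proof.
move=> hg; apply: functional_extensionality => x; apply: functional_extensionality => y.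
rewrite {1 3}/imul.
transitivity (\sum_(z <- itv x y) \sum_(w <- itv x y) f x w * g w z * h z y).
  apply: eq_big_seq => z; rewrite mitv => /andP[xz zy].
  by rewrite (mul_extl f hg xz zy) mulr_suml.
rewrite exchange_big /=; apply: eq_big_seq => w; rewrite mitv => /andP[xw wy].
rewrite (mul_extr h hg xw wy) mulr_sumr; apply: eq_bigr => z _; by rewrite mulrA.
Qed.

Lemma mul1f f : inc f -> mul one f = f.
Proof.
move=> hf; apply: functional_extensionality => x; apply: functional_extensionality => y.
have [xy|nxy] := boolP (x <= y)%O; last by rewrite mul_out // hf.
rewrite /imul (bigD1_seq x) ?uitv ?mitv ?lexx ?xy //= big1_seq ?addr0 /ione ?eqxx ?mul1r //.
by move=> z /andP[zx _]; rewrite eq_sym (negbTE zx) mul0r.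
Qed.

Lemma mulf1 f : inc f -> mul f one = f.
Proof.
move=> hf; apply: functional_extensionality => x; apply: functional_extensionality => y.
have [xy|nxy] := boolP (x <= y)%O; last by rewrite mul_out // hf.
rewrite /imul (bigD1_seq y) ?uitv ?mitv ?lexx ?xy //= big1_seq ?addr0 /ione ?eqxx ?mulr1 //.
by move=> z /andP[zx _]; rewrite (negbTE zx) mulr0.
Qed.

Lemma mulDr f g h : mul f (iadd g h) = iadd (mul f g) (mul f h).
Proof.
apply: functional_extensionality => x; apply: functional_extensionality => y.
by rewrite /iadd /imul -big_split; apply: eq_bigr => z _; rewrite mulrDr.
Qed.
Lemma mulDl f g h : mul (iadd g h) f = iadd (mul g f) (mul h f).
Proof.
apply: functional_extensionality => x; apply: functional_extensionality => y.
by rewrite /iadd /imul -big_split; apply: eq_bigr => z _; rewrite mulrDl.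
Qed.
Lemma mulBr f g h : mul f (isub g h) = isub (mul f g) (mul f h).
Proof.
apply: functional_extensionality => x; apply: functional_extensionality => y.
by rewrite /isub /imul -sumrB; apply: eq_bigr => z _; rewrite mulrBr.
Qed.
Lemma mulBl f g h : mul (isub g h) f = isub (mul g f) (mul h f).
Proof.
apply: functional_extensionality => x; apply: functional_extensionality => y.
by rewrite /isub /imul -sumrB; apply: eq_bigr => z _; rewrite mulrBl.
Qed.
Lemma subff f : isub f f = izero.
Proof.
apply: functional_extensionality => x; apply: functional_extensionality => y.
by rewrite /isub subrr.
Qed.
Lemma mul0f f : mul izero f = izero.
Proof.
apply: functional_extensionality => x; apply: functional_extensionality => y.
by rewrite /imul big1 // => z _; rewrite mul0r.
Qed.
Lemma mulf0 f : mul f izero = izero.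
Proof.
apply: functional_extensionality => x; apply: functional_extensionality => y.
by rewrite /imul big1 // => z _; rewrite mulr0.
Qed.
Lemma addf0 f : iadd f izero = f.
Proof.
apply: functional_extensionality => x; apply: functional_extensionality => y.
by rewrite /iadd addr0.
Qed.

Lemma diag_mul f g : idiag (mul f g) = mul (idiag f) (idiag g).
Proof.
apply: functional_extensionality => x; apply: functional_extensionality => y.
rewrite /idiag; case: eqP => [<-|/eqP nxy]; first by rewrite !mul_diag eqxx.
rewrite /imul big1 // => z _; case: (x =P z) => [xz|]; last by rewrite mul0r.
case: (z =P y) => [zy|_]; last by rewrite mulr0.
by move: nxy; rewrite xz zy eqxx.
Qed.

Lemma diagC f g : mul (idiag f) (idiag g) = mul (idiag g) (idiag f).
Proof.
rewrite -!diag_mul; apply: functional_extensionality => x;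
apply: functional_extensionality => y; rewrite /idiag; case: (x =P y) => // ->.
by rewrite !mul_diag mulrC.
Qed.

Lemma diag_one : idiag one = one.
Proof.
apply: functional_extensionality => x; apply: functional_extensionality => y.
by rewrite /idiag /ione; case: eqP => // ->; rewrite eqxx.
Qed.

Lemma size_itv_lt x y z : z \in itv x y -> z != x -> (size (itv z y) < size (itv x y))%N.
Proof.
move=> zI nzx; move: (zI); rewrite mitv => /andP[xz zy].
have hx : x \notin itv z y.
  rewrite mitv; apply/negP => /andP[zx _]; by move: nzx; rewrite eq_le zx xz.
have := uniq_leq_size (s1 := x :: itv z y) (s2 := itv x y).
rewrite /= hx uitv; apply => // w; rewrite inE => /orP[/eqP ->|].
  by rewrite mitv lexx (le_trans xz zy).
by rewrite !mitv => /andP[zw ->]; rewrite (le_trans xz zw).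
Qed.

Section Inv.
Variable f : X -> X -> R.
Hypothesis hf : inc f.
Hypothesis hd : forall x, f x x = 1.

Fixpoint gfix (k : nat) (x y : X) : R :=
  match k with
  | 0 => 0
  | k'.+1 => if x == y then 1 else if (x <= y)%O then
       - \sum_(z <- itv x y | z != x) f x z * gfix k' z y else 0
  end.

Definition ginv x y := gfix (size (itv x y)) x y.

Lemma gfix_stable k k' x y : (size (itv x y) <= k)%N -> (size (itv x y) <= k')%N ->
  gfix k x y = gfix k' x y.
Proof.
elim: k k' x y => [|k IH] k' x y hk hk'.
  have nxy : ~~ (x <= y)%O.
    apply/negP => xy; have : x \in itv x y by rewrite mitv lexx xy.
    by move: hk; rewrite leqn0 => /nilP ->.
  case: k' hk' => [|k'] _ //=; rewrite (negbTE nxy).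
  by case: eqP nxy => // ->; rewrite lexx.
have nxy0 : (0 < size (itv x y))%N -> True by [].
case: k' hk' => [|k'] hk'.
  have nxy : ~~ (x <= y)%O.
    apply/negP => xy; have : x \in itv x y by rewrite mitv lexx xy.
    by move: hk'; rewrite leqn0 => /nilP ->.
  rewrite /= (negbTE nxy); by case: eqP nxy => // ->; rewrite lexx.
rewrite /=; case: eqP => // _; case: ifP => // xy; congr (- _).
rewrite [LHS]big_seq_cond [RHS]big_seq_cond; apply: eq_bigr => z /andP[zI zx].
have lt := size_itv_lt zI zx.
rewrite (IH k' z y) //; rewrite -ltnS.
  exact: leq_trans lt hk.
exact: leq_trans lt hk'.
Qed.

Lemma ginv_eq x y : (x <= y)%O -> x != y ->
  ginv x y = - \sum_(z <- itv x y | z != x) f x z * ginv z y.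
Proof.
move=> xy nxy; rewrite /ginv.
have : x \in itv x y by rewrite mitv lexx xy.
case E: (size (itv x y)) => [|k]; first by move/size0nil: E => ->.
move=> _; rewrite /= (negbTE nxy) xy; congr (- _).
rewrite [LHS]big_seq_cond [RHS]big_seq_cond; apply: eq_bigr => z /andP[zI zx].
by rewrite (@gfix_stable k (size (itv z y))) //; have := size_itv_lt zI zx; rewrite E ltnS.
Qed.

Lemma ginv_diag x : ginv x x = 1.
Proof.
rewrite /ginv; have : x \in itv x x by rewrite mitv lexx.
case E: (size (itv x x)) => [|k]; first by move/size0nil: E => ->.
by rewrite /= eqxx.
Qed.

Lemma inc_ginv : inc ginv.
Proof.
move=> x y nxy; rewrite /ginv; case: (size _) => [|k] //=.
rewrite (negbTE nxy); by case: eqP nxy => // ->; rewrite lexx.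
Qed.

Lemma mul_ginv : mul f ginv = one.
Proof.
apply: functional_extensionality => x; apply: functional_extensionality => y.
have [xy|nxy] := boolP (x <= y)%O; last by rewrite mul_out // inc_one.
case: (x =P y) => [<-|/eqP ne].
  by rewrite mul_diag hd ginv_diag mul1r /ione eqxx.
rewrite /imul (bigD1_seq x) ?uitv ?mitv ?lexx ?xy //= hd mul1r ginv_eq // addNr.
by rewrite /ione (negbTE ne).
Qed.
End Inv.

Lemma inv_exists f : inc f -> (forall x, f x x = 1) ->
  exists g, [/\ inc g, mul f g = one & mul g f = one].
Proof.
move=> hf hd; exists (ginv f); split; first exact: inc_ginv.
  exact: mul_ginv.
have hg := inc_ginv f.
have hgd : forall x, ginv f x x = 1 by move=> x; apply: ginv_diag.
have e : f = ginv (ginv f).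
  rewrite -[LHS](mulf1 hf) -(mul_ginv hgd) -mulA; last exact: hg.
  by rewrite mul_ginv // mul1f //; apply: inc_ginv.
by rewrite {2}e mul_ginv.
Qed.


Hint Resolve inc_mul inc_diag inc_one inc_zero inc_add inc_sub : incdb.

Lemma conjK b c D : inc b -> inc c -> inc D -> mul c b = one ->
  mul (mul c (mul (mul b D) c)) b = D.
Proof.
move=> hb hc hD e.
rewrite !mulA ?e ?mulf1 //; auto with incdb.
rewrite -mulA ?e ?mul1f //.
Qed.


Lemma conjM b c p q : inc b -> inc c -> inc p -> inc q -> mul b c = one ->
  mul (mul (mul c p) b) (mul (mul c q) b) = mul (mul c (mul p q)) b.
Proof.
move=> hb hc hp hq e.
rewrite !mulA; auto with incdb.
rewrite -[mul b (mul c _)]mulA // e mul1f; auto with incdb.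
Qed.

Lemma commM p q D : inc p -> inc q -> inc D -> mul p D = mul D p -> mul q D = mul D q ->
  mul (mul p q) D = mul D (mul p q).
Proof.
move=> hp hq hD ep eq.
rewrite mulA // eq -mulA // ep mulA //.
Qed.

Lemma commB1 p D : inc p -> inc D -> mul p D = mul D p ->
  mul (isub one p) D = mul D (isub one p).
Proof. by move=> hp hD e; rewrite mulBl mulBr mul1f // mulf1 // e. Qed.

Lemma commDD p q D : mul p D = mul D p -> mul q D = mul D q ->
  mul (iadd p q) D = mul D (iadd p q).
Proof. by move=> ep eq; rewrite mulDl mulDr ep eq. Qed.

Section Main.
Variables (n : nat) (alpha : 'I_n -> X -> X -> R).
Hypothesis Halpha : forall i, inc (alpha i).
Hypothesis Hidem : forall i, mul (alpha i) (alpha i) = alpha i.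
Hypothesis Hcomm : forall i j, mul (alpha i) (alpha j) = mul (alpha j) (alpha i).
Hint Resolve Halpha : incdb.

Lemma stepP k : (k <= n)%N -> exists b c, [/\ inc b, inc c, mul b c = one, mul c b = one &
  forall i : 'I_n, (i < k)%N -> alpha i = mul (mul b (idiag (alpha i))) c].
Proof.
elim: k => [|k IH] hk.
  by exists one, one; split => //; rewrite ?mul1f; auto with incdb.
have [b [c [hb hc ebc ecb Hi]]] := IH (ltnW hk).
pose j := Ordinal hk.
pose a' := mul (mul c (alpha j)) b.
pose f := idiag a'.
have ha' : inc a' by exact: inc_mul.
have hf : inc f by exact: inc_diag.
have Dconj : forall i : 'I_n, (i < k)%N -> mul (mul c (alpha i)) b = idiag (alpha i).
  move=> i hi; rewrite {1}(Hi i hi) conjK //; auto with incdb.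
have idem' : mul a' a' = a'.
  rewrite /a' !mulA; auto with incdb.
  rewrite -[mul b (mul c _)]mulA // ebc mul1f; auto with incdb.
  by rewrite -[mul (alpha j) (mul (alpha j) b)]mulA // Hidem.
have comm' : forall i : 'I_n, (i < k)%N -> mul a' (idiag (alpha i)) = mul (idiag (alpha i)) a'.
  move=> i hi; rewrite -(Dconj i hi) /a' !conjM; auto with incdb.
  by rewrite Hcomm.
have fdiag : idiag (alpha j) = f.
  rewrite /f /a' !diag_mul [mul (idiag c) _]diagC mulA; auto with incdb.
  by rewrite -diag_mul ecb diag_one mulf1; auto with incdb.
have aj : alpha j = mul (mul b a') c by rewrite /a' conjK; auto with incdb.
have fidem : mul f f = f by rewrite /f -diag_mul idem'.
have fxx : forall x, f x x = a' x x by move=> x; rewrite /f /idiag eqxx.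
have fD : forall i : 'I_n, mul f (idiag (alpha i)) = mul (idiag (alpha i)) f.
  by move=> i; rewrite /f diagC.
clearbody a' f.
pose u := iadd (mul a' f) (mul (isub one a') (isub one f)).
have hu : inc u by rewrite /u; auto with incdb.
have udiag : forall x, u x x = 1.
  move=> x; rewrite /u /iadd !mul_diag /isub /ione eqxx.
  have he : a' x x * a' x x = a' x x by rewrite -mul_diag idem'.
  rewrite fxx mulrBl mul1r mulrBr mulr1 he subrr subr0 addrC subrK //.
have au : mul a' u = mul a' f.
  rewrite /u mulDr -!mulA; auto with incdb.
  by rewrite idem' (mulBr a') mulf1 // idem' subff mul0f addf0.
have uf : mul u f = mul a' f.
  rewrite /u mulDl !mulA; auto with incdb.
  by rewrite fidem (mulBl f) mul1f // fidem subff mulf0 addf0.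
have uD : forall i : 'I_n, (i < k)%N -> mul u (idiag (alpha i)) = mul (idiag (alpha i)) u.
  move=> i hi; rewrite /u; apply: commDD.
    by apply: commM; auto with incdb.
  apply: commM; auto with incdb; apply: commB1; auto with incdb.
clearbody u.
have [v [hv euv evu]] := inv_exists hu udiag.
exists (mul b u), (mul v c); split; auto with incdb.
- rewrite mulA; auto with incdb.
  by rewrite -[mul u (mul v c)]mulA // euv mul1f // ebc.
- rewrite mulA; auto with incdb.
  by rewrite -[mul c (mul b u)]mulA // ecb mul1f // evu.
move=> i; rewrite ltnS leq_eqVlt => /orP[/eqP ik|hi]; last first.
  rewrite {1}(Hi i hi) !mulA; auto with incdb.
  rewrite -[mul u (mul _ (mul v c))]mulA; auto with incdb.
  rewrite uD // mulA; auto with incdb.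
  by rewrite -[mul u (mul v c)]mulA // euv mul1f.
have -> : i = j by apply: val_inj.
rewrite fdiag {1}aj !mulA; auto with incdb.
rewrite -[mul u (mul f (mul v c))]mulA // uf -au mulA; auto with incdb.
by rewrite -[mul u (mul v c)]mulA // euv mul1f.
Qed.
End Main.
End Inc.

Theorem lemma5p4 (d : Order.disp_t) (X : porderType d) (R : comPzRingType)
  (itv : X -> X -> seq X) (Hitv : is_interval_enum itv)
  (n : nat) (alpha : 'I_n -> X -> X -> R)
  (Halpha : forall i, in_incidence (alpha i))
  (Hidem : forall i, imul itv (alpha i) (alpha i) = alpha i)
  (Hcomm : forall i j, imul itv (alpha i) (alpha j) = imul itv (alpha j) (alpha i)) :
  exists beta gamma : X -> X -> R,
    [/\ in_incidence beta, in_incidence gamma,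
        imul itv beta gamma = @ione _ X R, imul itv gamma beta = @ione _ X R &
        forall i, alpha i = imul itv (imul itv beta (idiag (alpha i))) gamma].
Proof.
have [b [c [hb hc e1 e2 H]]] := stepP Hitv Halpha Hidem Hcomm (leqnn n).
by exists b, c; split => // i; apply: H.
Qed.
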